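(* Let $a:[0,\infty)\to[0,\infty)$ be non-negative and non-decreasing, and define its generalized inverse $a^{\leftarrow}(y)=\sup\{x\ge0:a(x)\le y\}$ for $y\ge a(0)$. Let $s\in\{1,2,\dots\}$, $\delta\in(0,1/2)$, and for $n=1,2,\dots$ let $S_s(n)=\sum_{k=0}^n\ln\bigl(1+\tfrac1{\sqrt s}a\bigl(\tfrac{k+1}{\sqrt s}\bigr)\bigr)$. Then $0\le S_s(n)-\sqrt s\int_0^{(n+1)/\sqrt s}\ln\bigl(1+\tfrac1{\sqrt s}a(x)\bigr)dx\le\tfrac12 s^{\delta-1/2}$ whenever $n+1<\sqrt s\,a^{\leftarrow}(s^\delta/2)$. Furthermore, let $A(x)=\int_0^x a^2(u)\,du$ for $x\ge0$. Unless $a\equiv0$, $A$ is continuous and strictly increasing from $0$ at $x_0:=\sup\{x\ge0:a(x)=0\}$ to $\infty$ as $x\to\infty$; and, with $A^{\leftarrow}(y)=\sup\{x\ge0:A(x)\le y\}$, $0\le\int_0^{(n+1)/\sqrt s}a(x)\,dx-\sqrt s\int_0^{(n+1)/\sqrt s}\ln\bigl(1+\tfrac1{\sqrt s}a(x)\bigr)dx\le\tfrac12 s^{-\delta}$ whenever $n+1<\sqrt s\,A^{\leftarrow}(s^{1/2-\delta})$. *)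

(* Defs.v *)
From HB Require Import structures.
From mathcomp Require Import all_boot all_order all_algebra.
From mathcomp Require Import all_classical all_reals all_analysis.
Set Implicit Arguments. Unset Strict Implicit. Unset Printing Implicit Defensive.
Import Order.TTheory GRing.Theory Num.Theory.
Import numFieldNormedType.Exports.
Local Open Scope classical_set_scope.
Local Open Scope ring_scope.

(* Lebesgue integral of f over [0, t] (real valued; the integrands used
   below are monotone/bounded on compacts, hence integrable). *)
Definition int0 (R : realType) (f : R -> R) (t : R) : R :=
  Rintegral (@lebesgue_measure R) `[0, t] f.

(* generalized inverse  f^{<-}(y) = sup {x >= 0 : f x <= y}, valued in the
   extended reals (+oo when the set is unbounded, -oo when it is empty). *)
Definition ginv (R : realType) (f : R -> R) (y : R) : \bar R :=
  ereal_sup (EFin @` [set x : R | 0 <= x /\ f x <= y]).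

Definition Afun (R : realType) (a : R -> R) (x : R) : R :=
  int0 (fun u => a u ^+ 2) x.

(* x0 = sup {x >= 0 : a x = 0}, with the convention sup of the empty set
   (among x >= 0) equal to 0. *)
Definition x0 (R : realType) (a : R -> R) : R :=
  sup ([set 0] `|` [set x : R | 0 <= x /\ a x = 0]).

Definition Ssum (R : realType) (a : R -> R) (s n : nat) : R :=
  \sum_(0 <= k < n.+1)
     ln (1 + (Num.sqrt (s%:R))^-1 * a (k.+1%:R / Num.sqrt (s%:R))).

(* Main.v *)
Require Import Defs.
From HB Require Import structures.
From mathcomp Require Import all_boot all_order all_algebra.
From mathcomp Require Import all_classical all_reals all_analysis.
From mathcomp Require Import measurable_realfun lra ring.
Import Order.TTheory GRing.Theory Num.Theory.
Import numFieldNormedType.Exports.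
Local Open Scope classical_set_scope.
Local Open Scope ring_scope.

Section toolkit.
Context {R : realType}.
Notation mu := (@lebesgue_measure R).

Lemma nd_int {f : R -> R} (nd : nondecreasing_fun f) (c d : R) :
  mu.-integrable `[c, d] (EFin \o f).
Proof.
apply: measurable_bounded_integrable => //.
- have := lebesgue_measure_itv `[c, d] => /= ->.
  by case: ifP => _; rewrite ?ltry.
- exact: nondecreasing_measurable.
- rewrite /bounded_near; near=> M => x /=; rewrite in_itv/= => /andP[cx xd].
  have h1 := nd _ _ cx; have h2 := nd _ _ xd.
  have hM : `|f c| + `|f d| <= M by near: M; apply: nbhs_pinfty_ge; rewrite num_real.
  apply: le_trans hM.
  have /andP[e1 e2] : - `|f c| <= f c <= `|f c| by rewrite -ler_norml.
  have /andP[e3 e4] : - `|f d| <= f d <= `|f d| by rewrite -ler_norml.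
  rewrite ler_norml; apply/andP; split.
  - by rewrite (le_trans _ (le_trans e1 h1)) // lerN2 lerDl normr_ge0.
  - by rewrite (le_trans (le_trans h2 e4)) // lerDr normr_ge0.
Unshelve. all: end_near.
Qed.

Lemma nd_intS {f : R -> R} (nd : nondecreasing_fun f) (c d : R) (A : set R) :
  measurable A -> A `<=` `[c, d] -> mu.-integrable A (EFin \o f).
Proof. by move=> mA sA; apply: (@integrableS _ _ _ mu _ _ _ _ mA sA (nd_int nd c d)). Qed.

Lemma cst_nd (r : R) : nondecreasing_fun (fun _ : R => r).
Proof. by move=> *. Qed.

Lemma nd_split {f : R -> R} (nd : nondecreasing_fun f) {c e d : R} :
  c <= e -> e <= d ->
  \int[mu]_(x in `[c, d]) f x =
  \int[mu]_(x in `[c, e]) f x + \int[mu]_(x in `]e, d]) f x.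
Proof.
move=> ce ed.
have := @Rintegral_itvB R f (BLeft c) (BRight d) e (nd_int nd c d).
rewrite !bnd_simp => /(_ ce ed) <-.
by rewrite addrC subrK.
Qed.

Lemma mu_oc {e d : R} : e <= d -> fine (mu `]e, d]) = d - e.
Proof.
move=> ed; have := lebesgue_measure_itv `]e, d] => /= ->.
rewrite lte_fin; case: ltP => //= de.
have -> : d = e by apply/eqP; rewrite eq_le ed de.
by rewrite subrr.
Qed.

Lemma nd_lb {f : R -> R} (nd : nondecreasing_fun f) {e d : R} : e <= d ->
  (d - e) * f e <= \int[mu]_(x in `]e, d]) f x.
Proof.
move=> ed.
have sub : `]e, d] `<=` `[e, d] by apply: subset_itvr; rewrite bnd_simp.
rewrite -(mu_oc ed) mulrC -Rintegral_cst //.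
apply: le_Rintegral => //.
- by apply: (nd_intS (cst_nd (f e)) e d).
- by apply: (nd_intS nd e d).
- by move=> x /=; rewrite in_itv/= => /andP[/ltW ex _]; apply: nd.
Qed.

Lemma nd_ub {f : R -> R} (nd : nondecreasing_fun f) {e d : R} : e <= d ->
  \int[mu]_(x in `]e, d]) f x <= (d - e) * f d.
Proof.
move=> ed.
have sub : `]e, d] `<=` `[e, d] by apply: subset_itvr; rewrite bnd_simp.
rewrite -(mu_oc ed) mulrC -Rintegral_cst //.
apply: le_Rintegral => //.
- by apply: (nd_intS nd e d).
- by apply: (nd_intS (cst_nd (f d)) e d).
- by move=> x /=; rewrite in_itv/= => /andP[_ xd]; apply: nd.
Qed.

Lemma riemann {g : R -> R} (nd : nondecreasing_fun g) (h : R) (h0 : 0 <= h)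
  (m : nat) :
  h * \sum_(0 <= k < m) g (k%:R * h) <= \int[mu]_(x in `[0, m%:R * h]) g x
  /\ \int[mu]_(x in `[0, m%:R * h]) g x <= h * \sum_(0 <= k < m) g (k.+1%:R * h).
Proof.
elim: m => [|m [IH1 IH2]].
  by rewrite !big_geq // mulr0 mul0r set_itv1 Rintegral_set1.
have e1 : 0 <= m%:R * h by rewrite mulr_ge0.
have e2 : m%:R * h <= m.+1%:R * h by rewrite ler_wpM2r // ler_nat.
have e3 : m.+1%:R * h - m%:R * h = h by rewrite -natr1 mulrDl mul1r addrAC subrr add0r.
rewrite (nd_split nd e1 e2) !big_nat_recr //= !mulrDr.
split; apply: lerD => //.
  by have := nd_lb nd e2; rewrite e3.
by have := nd_ub nd e2; rewrite e3.
Qed.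
End toolkit.

Section lnb.
Context {R : realType}.

Lemma is_derive_ln1p (z : R) : -1 < z ->
  is_derive z 1 (fun u : R => ln (1 + u)) (1 + z)^-1.
Proof.
move=> z1.
have hz : 0 < 1 + z by lra.
have hd : is_derive z 1 (cst 1 + id) (0 + 1) by apply: is_deriveD.
have dh : derivable (fun u : R => 1 + u) z 1.
  exact: (@ex_derive _ _ _ _ _ _ _ hd).
have dl : derivable (@ln R) (1 + z) 1.
  by apply: ex_derive; apply: is_derive1_ln.
have -> : (fun u : R => ln (1 + u)) = (@ln R) \o (fun u => 1 + u) by [].
split.
  apply/derivable1_diffP; apply: differentiable_comp; exact/derivable1_diffP.
rewrite -derive1E derive1_comp //.
have [_ h2] := is_derive1_ln hz.
rewrite derive1E h2.
have -> : (fun u : R => 1 + u)^`()%classic z = 1.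
  by rewrite derive1E (@derive_val _ _ _ _ _ _ _ hd) add0r.
by rewrite mulr1.
Qed.


Definition Gf : R -> R :=
  (fun u : R => ln (1 + u)) - id + (2^-1 \*: (id * id)).

Lemma Gf_val x : Gf x = ln (1 + x) - x + 2^-1 * (x * x).
Proof. by []. Qed.

Lemma is_derive_G (z : R) : -1 < z -> is_derive z 1 Gf ((1 + z)^-1 - 1 + z).
Proof.
move=> z1.
have H : is_derive z 1 Gf ((1 + z)^-1 - 1 + 2^-1 *: (id z *: 1 + id z *: 1)).
  apply: is_deriveD; first apply: is_deriveB.
  exact: is_derive_ln1p.
apply: (is_derive_eq H).
congr (_ + _); rewrite /GRing.scale /= !mulr1; by field.
Qed.

Lemma ln1p_lb {u : R} : 0 <= u -> u - u ^+ 2 / 2 <= ln (1 + u).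
Proof.
move=> u0.
have key : Gf 0 <= Gf u.
  apply: (@ger0_derive1_ndecr _ Gf 0 u) => //.
  - move=> x; rewrite in_itv/= => /andP[x0 _].
    have hx : -1 < x by lra.
    by have [] := is_derive_G x hx.
  - move=> x; rewrite in_itv/= => /andP[x0 _].
    have hx1 : -1 < x by lra.
    rewrite derive1E; have [_ ->] := is_derive_G x hx1.
    have hx : 0 < 1 + x by lra.
    have -> : (1 + x)^-1 - 1 + x = x ^+ 2 / (1 + x) by field; lra.
    by apply: divr_ge0; [apply: sqr_ge0 | lra].
  - apply: derivable_within_continuous => x; rewrite in_itv/= => /andP[x0 _].
    have hx : -1 < x by lra.
    by have [] := is_derive_G x hx.
move: key; rewrite !Gf_val mulr0 addr0 ln1 subr0.
move=> h; rewrite expr2; lra.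
Qed.
End lnb.

Section aux.
Context {R : realType}.
Notation mu := (@lebesgue_measure R).

Lemma cond_div (rs c : R) (G : \bar R) : 0 < rs ->
  (c%:E < rs%:E * G)%E -> ((c / rs)%:E < G)%E.
Proof.
move=> r0; case: G => [r| |] /=.
- by rewrite -EFinM !lte_fin ltr_pdivrMr // mulrC.
- by rewrite ltry.
- by rewrite muleC gt0_mulNye ?lte_fin // ltNge leNye.
Qed.

Lemma ginv_le {f : R -> R} (fnd : forall x y, 0 <= x -> x <= y -> f x <= f y)
  {y t : R} : 0 <= t -> ((t%:E < ginv f y)%E) -> f t <= y.
Proof.
move=> t0 /ereal_sup_gt [_ [z [z0 fz] <-]]; rewrite lte_fin => tz.
exact: le_trans (fnd _ _ t0 (ltW tz)) fz.
Qed.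

Definition bb (a : R -> R) (x : R) := a (Order.max 0 x).

Lemma bb_nd {a : R -> R} (a_nd : forall x y, 0 <= x -> x <= y -> a x <= a y) :
  nondecreasing_fun (bb a).
Proof.
move=> x y xy; apply: a_nd; first by rewrite le_max lexx.
by rewrite ge_max le_max lexx /= le_max xy orbT.
Qed.

Lemma bb_eq (a : R -> R) {x} : 0 <= x -> bb a x = a x.
Proof. by move=> x0; rewrite /bb (max_idPr x0). Qed.

Lemma bb_ge0 {a : R -> R} (a_ge0 : forall x, 0 <= x -> 0 <= a x) x : 0 <= bb a x.
Proof. by apply: a_ge0; rewrite le_max lexx. Qed.

Lemma int0_eq (f g : R -> R) t : (forall x, 0 <= x -> f x = g x) ->
  int0 f t = \int[mu]_(x in `[0, t]) g x.
Proof.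
move=> fg; rewrite /int0; apply: eq_Rintegral => x.
rewrite inE /= in_itv /= => /andP[x0 _]; exact: fg.
Qed.

End aux.

Section p3.
Context {R : realType}.
Notation mu := (@lebesgue_measure R).

Lemma sq_nd {f : R -> R} : nondecreasing_fun f -> (forall x, 0 <= f x) ->
  nondecreasing_fun (fun x => f x ^+ 2).
Proof.
move=> nd f0 x y xy; rewrite !expr2; apply: ler_pM => //; exact: nd.
Qed.

Lemma Afun_B (a : R -> R) x : Afun a x = \int[mu]_(u in `[0, x]) (bb a u ^+ 2).
Proof. by apply: int0_eq => u u0; rewrite bb_eq. Qed.

Lemma Afun_nd (a : R -> R) (a_ge0 : forall x, 0 <= x -> 0 <= a x)
  (a_nd : forall x y, 0 <= x -> x <= y -> a x <= a y) :
  forall x y, 0 <= x -> x <= y -> Afun a x <= Afun a y.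
Proof.
move=> x y x0 xy; rewrite !Afun_B.
have Bnd := sq_nd (bb_nd a_nd) (bb_ge0 a_ge0).
rewrite (nd_split Bnd x0 xy) lerDl.
apply: le_trans (nd_lb Bnd xy).
by apply: mulr_ge0; [rewrite subr_ge0 | exact: sqr_ge0].
Qed.

Lemma quarter_pow (s : nat) (delta : R) : (0 < s)%N ->
  powR (s%:R) (1 / 2 - delta) * (2 * Num.sqrt (s%:R : R))^-1 =
  1 / 2 * powR (s%:R) (- delta).
Proof.
move=> s0.
have sn0 : (s%:R : R) != 0 by rewrite pnatr_eq0 -lt0n.
have r0 : Num.sqrt (s%:R : R) != 0 by rewrite sqrtr_eq0 -ltNge ltr0n.
have p0 : powR (s%:R : R) delta != 0 by rewrite gt_eqF // powR_gt0 // ltr0n.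
rewrite powRB; last by apply/implyP.
rewrite powRN div1r powR12_sqrt ?ler0n //; field.
by rewrite r0 p0.
Qed.

Lemma part3 (a : R -> R) (s : nat) (delta : R)
  (a_ge0 : forall x, 0 <= x -> 0 <= a x)
  (a_nd : forall x y, 0 <= x -> x <= y -> a x <= a y)
  (s_gt0 : (0 < s)%N) (n : nat) :
  let rs := Num.sqrt (s%:R : R) in
  let L := fun x => ln (1 + rs^-1 * a x) in
  ((n.+1%:R)%:E < rs%:E * ginv (Afun a) (powR (s%:R) (1 / 2 - delta)))%E ->
     0 <= int0 a (n.+1%:R / rs) - rs * int0 L (n.+1%:R / rs) /\
     int0 a (n.+1%:R / rs) - rs * int0 L (n.+1%:R / rs)
       <= 1 / 2 * powR (s%:R) (- delta).
Proof.
move=> rs L H.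
have r0 : 0 < rs by rewrite sqrtr_gt0 ltr0n.
have h0 : 0 < rs^-1 by rewrite invr_gt0.
have rh : rs * rs^-1 = 1 by rewrite mulfV // gt_eqF.
set h := rs^-1 in h0 rh *.
set t := n.+1%:R / rs.
have t0 : 0 <= t by apply: mulr_ge0; [exact: ler0n | exact: ltW].
have bnd := bb_nd a_nd.
have b0 := bb_ge0 a_ge0.
pose Lb := fun x => ln (1 + h * bb a x).
have hb x : 0 <= h * bb a x by apply: mulr_ge0; [exact: ltW | exact: b0].
have pos x : 0 < 1 + h * bb a x by have := hb x; lra.
have Lnd : nondecreasing_fun Lb.
  move=> x y xy; rewrite /Lb ler_ln ?posrE ?pos //.
  by rewrite lerD2l ler_wpM2l ?(ltW h0) //; apply: bnd.
pose P := fun x => rs * Lb x.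
have Pnd : nondecreasing_fun P by move=> x y xy; rewrite /P ler_wpM2l ?(ltW r0) // Lnd.
pose Q := fun x => bb a x ^+ 2 * (2 * rs)^-1.
have Bnd := sq_nd bnd b0.
have Qnd : nondecreasing_fun Q.
  move=> x y xy; rewrite /Q; apply: ler_wpM2r; last exact: Bnd.
  by rewrite invr_ge0; apply: mulr_ge0 => //; exact: ltW.
have PQnd : nondecreasing_fun (fun x => P x + Q x).
  by move=> x y xy; apply: lerD; [apply: Pnd | apply: Qnd].
have HA : int0 a t = \int[mu]_(x in `[0, t]) bb a x.
  by apply: int0_eq => x x0; rewrite bb_eq.
have HL : rs * int0 L t = \int[mu]_(x in `[0, t]) P x.
  rewrite /P RintegralZl //; last exact: nd_int.
  by congr (_ * _); apply: int0_eq => x x0; rewrite /Lb bb_eq.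
rewrite HA HL.
have At : Afun a t <= powR (s%:R) (1 / 2 - delta).
  apply: (ginv_le (Afun_nd _ a_ge0 a_nd) t0); exact: cond_div.
split.
  rewrite subr_ge0; apply: le_Rintegral => //; try exact: nd_int.
  move=> x _; rewrite /P /Lb.
  have := le_ln1Dx (_ : -1 < h * bb a x); rewrite (_ : -1 < _); last first.
    by have := hb x; lra.
  move=> /(_ isT) le.
  by have := ler_wpM2l (ltW r0) le; rewrite mulrA rh mul1r.
have le1 : \int[mu]_(x in `[0, t]) bb a x <= \int[mu]_(x in `[0, t]) (P x + Q x).
  apply: le_Rintegral => //; try exact: nd_int.
  move=> x _; rewrite /P /Q /Lb.
  have := ler_wpM2l (ltW r0) (ln1p_lb (hb x)).
  have -> : rs * (h * bb a x - (h * bb a x) ^+ 2 / 2) =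
            bb a x - bb a x ^+ 2 * (2 * rs)^-1.
    rewrite /h; field; by rewrite gt_eqF.
  lra.
rewrite RintegralD // in le1; try exact: nd_int.
rewrite /Q RintegralZr // in le1; last exact: (nd_int Bnd).
rewrite -Afun_B in le1.
have hq : 0 <= (2 * rs)^-1 by rewrite invr_ge0; apply: mulr_ge0 => //; exact: ltW.
have := ler_wpM2r hq At; rewrite quarter_pow // => Hf.
lra.
Qed.
End p3.

Section p2.
Context {R : realType}.
Notation mu := (@lebesgue_measure R).

Lemma maxdist (x y : R) : `|Order.max 0 x - Order.max 0 y| <= `|x - y|.
Proof.
have h1 := ler_norm (x - y).
have h2 : y - x <= `|x - y| by rewrite distrC ler_norm.
rewrite ler_norml.
case: (leP 0 x) => hx; case: (leP 0 y) => hy.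
all: by apply/andP; split; lra.
Qed.

Lemma AB_neg (g : R -> R) x : x <= 0 ->
  \int[mu]_(u in `[0, x]) g u = \int[mu]_(u in `[0, Order.max 0 x]) g u.
Proof.
move=> x0; rewrite (max_idPl x0) set_itv1 Rintegral_set1.
case: (ltgtP x 0) => h.
- by rewrite set_itv_ge ?Rintegral_set0 // bnd_simp -ltNge.
- by move: x0; rewrite leNgt h.
- by rewrite h set_itv1 Rintegral_set1.
Qed.

Lemma AB_max (g : R -> R) x :
  \int[mu]_(u in `[0, x]) g u = \int[mu]_(u in `[0, Order.max 0 x]) g u.
Proof.
have [h|h] := boolP (x <= 0); first exact: AB_neg.
by rewrite (max_idPr (ltW _)) // ltNge.
Qed.

Lemma AB_lip {g : R -> R} (nd : nondecreasing_fun g) (g0 : forall x, 0 <= g x)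
  (M p q : R) : 0 <= p -> 0 <= q -> p <= M -> q <= M ->
  `|\int[mu]_(u in `[0, q]) g u - \int[mu]_(u in `[0, p]) g u| <= `|q - p| * g M.
Proof.
have gen : forall p q, 0 <= p -> p <= q -> q <= M ->
    `|\int[mu]_(u in `[0, q]) g u - \int[mu]_(u in `[0, p]) g u| <= `|q - p| * g M.
  move=> p' q' p0 pq qM.
  rewrite (nd_split nd p0 pq) addrAC subrr add0r.
  have lb := nd_lb nd pq; have ub := nd_ub nd pq.
  have gp0 := g0 p'.
  have lb0 : 0 <= (q' - p') * g p' by apply: mulr_ge0; [lra | exact: g0].
  rewrite ger0_norm; last exact: le_trans lb.
  rewrite ger0_norm; last lra.
  apply: le_trans ub _; apply: ler_wpM2l; first lra.
  exact: nd.
move=> p0 q0 pM qM; case: (leP p q) => pq.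
  exact: gen.
by rewrite distrC [`|q - p|]distrC; apply: gen => //; exact: ltW.
Qed.


Lemma AB_cont {g : R -> R} (nd : nondecreasing_fun g) (g0 : forall x, 0 <= g x) (x : R) :
  {for x, continuous (fun y : R => \int[mu]_(u in `[0, y]) g u)}.
Proof.
apply/cvgrPdist_le => /= e e0.
set M := `|x| + 1.
set K := g M + 1.
have K0 : 0 < K by have := g0 M; rewrite /K; lra.
set d := Order.min 1 (e / K).
have d1 : d <= 1 by rewrite /d ge_min lexx.
have de : d <= e / K by rewrite /d ge_min lexx orbT.
have d0 : 0 < d by rewrite /d lt_min ltr01 divr_gt0.
apply/nbhs_ballP; exists d => // y; rewrite /ball /= => hy.
rewrite AB_max [X in `|_ - X|]AB_max.
have hxM : `|x| <= M by rewrite /M; lra.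
have hyM : `|y| <= M.
  have := ler_distD x y 0; rewrite !subr0 distrC.
  have := normrN y; rewrite /M; lra.
have h1 : forall z : R, `|z| <= M -> Order.max 0 z <= M.
  move=> z zM; rewrite ge_max; apply/andP; split.
    by rewrite /M; have := normr_ge0 x; lra.
  exact: le_trans (ler_norm z) zM.
have h0 : forall z : R, 0 <= Order.max 0 z by move=> z; rewrite le_max lexx.
apply: le_trans (AB_lip nd g0 M _ _ (h0 y) (h0 x) (h1 _ hyM) (h1 _ hxM)) _.
have md := maxdist x y.
have gM := g0 M.
apply: (@le_trans _ _ (d * g M)).
  apply: ler_wpM2r => //; lra.
apply: (@le_trans _ _ (e / K * K)); last by rewrite divfK // gt_eqF.
apply: (@le_trans _ _ (e / K * g M)); first by apply: ler_wpM2r.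
apply: ler_wpM2l; first by rewrite divr_ge0 // ltW.
by rewrite /K lerDl.
Qed.

End p2.

Section p2b.
Context {R : realType}.
Notation mu := (@lebesgue_measure R).

Lemma part2 (a : R -> R)
  (a_ge0 : forall x, 0 <= x -> 0 <= a x)
  (a_nd : forall x y, 0 <= x -> x <= y -> a x <= a y) :
  (exists x, 0 <= x /\ a x != 0) ->
     {within `[0, +oo[, continuous (Afun a)} /\
     Afun a (x0 a) = 0 /\
     {in `[x0 a, +oo[ &, {homo Afun a : x y / x < y}} /\
     Afun a x @[x --> +oo] --> +oo.
Proof.
move=> [x1 [x10 ax1]].
have bnd := bb_nd a_nd.
have b0 := bb_ge0 a_ge0.
have Bnd := sq_nd bnd b0.
have B0 : forall x, 0 <= bb a x ^+ 2 by move=> x; exact: sqr_ge0.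
have AE : Afun a = fun x => \int[mu]_(u in `[0, x]) (bb a u ^+ 2).
  by apply/funext => x; exact: Afun_B.
have ax1p : 0 < a x1 by rewrite lt_neqAle eq_sym ax1 a_ge0.
set Z := [set 0] `|` [set x : R | 0 <= x /\ a x = 0].
have Z0 : Z 0 by left.
have ubZ : ubound Z x1.
  move=> z [->//|[z0 az]].
  case: (leP z x1) => // h.
  by have := a_nd _ _ x10 (ltW h); rewrite az; lra.
have hub : has_ubound Z by exists x1.
have nZ : Z !=set0 by exists 0.
have xx0 : 0 <= x0 a by exact: (ub_le_sup hub Z0).
have below : forall t, 0 <= t -> t < x0 a -> a t = 0.
  move=> t t0 tx; have [z Zz tz] := sup_gt nZ tx.
  case: Zz => [z0|[z0 az]]; first by rewrite z0 in tz; lra.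
  have := a_nd _ _ t0 (ltW tz); rewrite az => h.
  by have := a_ge0 _ t0; lra.
have above : forall t, x0 a < t -> 0 < a t.
  move=> t xt; have t0 : 0 <= t by lra.
  rewrite lt_neqAle a_ge0 // andbT eq_sym; apply/eqP => at0.
  have : t <= x0 a by apply: (ub_le_sup hub); right.
  lra.
rewrite AE; split; last split; last split.
- apply: continuous_in_subspaceT => x _.
  exact: AB_cont.
- rewrite -Rintegral_itv_bndo_bndc; last first.
    by apply: (nd_intS Bnd 0 (x0 a)) => //; apply: subset_itvl; rewrite bnd_simp.
  have -> : \int[mu]_(u in `[0, x0 a[) (bb a u ^+ 2) = \int[mu]_(u in `[0, x0 a[) (0:R).
    apply: eq_Rintegral => u; rewrite inE /= in_itv /= => /andP[u0 ux].
    by rewrite bb_eq // below // expr0n.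
  by rewrite Rintegral_cst // mul0r.
- move=> x y; rewrite !in_itv /= !andbT => hx hy xy.
  set m := (x + y) / 2.
  have xm : x <= m by rewrite /m; lra.
  have my : m <= y by rewrite /m; lra.
  have x0' : 0 <= x by lra.
  have m0 : 0 <= m by lra.
  rewrite (nd_split Bnd m0 my).
  have := nd_lb Bnd my.
  have := Afun_nd _ a_ge0 a_nd _ _ x0' xm; rewrite !Afun_B.
  have bm : 0 < bb a m ^+ 2.
    rewrite bb_eq // exprn_gt0 // above //; rewrite /m; lra.
  have : 0 < (y - m) * bb a m ^+ 2 by rewrite mulr_gt0 // subr_gt0 /m; lra.
  lra.
- apply/cvgryPge => A.
  set c := bb a x1 ^+ 2.
  have c0 : 0 < c by rewrite /c bb_eq // exprn_gt0.
  near=> x.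
  have hx : x1 + `|A| / c <= x.
    by near: x; apply: nbhs_pinfty_ge; rewrite num_real.
  have Ac : 0 <= `|A| / c by rewrite divr_ge0 // ltW.
  have xx1 : x1 <= x by lra.
  rewrite (nd_split Bnd x10 xx1).
  have := nd_lb Bnd xx1; rewrite -/c.
  have := Afun_nd _ a_ge0 a_nd _ _ (le_refl 0) x10; rewrite !Afun_B.
  rewrite set_itv1 Rintegral_set1 => h1 h2.
  have : `|A| / c * c <= (x - x1) * c by apply: ler_wpM2r; [exact: ltW | lra].
  rewrite divfK ?gt_eqF // => h3.
  have := ler_norm A; lra.
Unshelve. all: end_near.
Qed.

End p2b.

Section p1.
Context {R : realType}.
Notation mu := (@lebesgue_measure R).

Lemma half_pow (s : nat) (delta : R) : (0 < s)%N ->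
  (Num.sqrt (s%:R : R))^-1 * (powR (s%:R) delta / 2) =
  1 / 2 * powR (s%:R) (delta - 1 / 2).
Proof.
move=> s0.
have sn0 : (s%:R : R) != 0 by rewrite pnatr_eq0 -lt0n.
rewrite powRB; last by apply/implyP.
rewrite div1r powR12_sqrt ?ler0n //; field.
by rewrite sqrtr_eq0 -ltNge ltr0n.
Qed.

Lemma part1 (a : R -> R) (s : nat) (delta : R)
  (a_ge0 : forall x, 0 <= x -> 0 <= a x)
  (a_nd : forall x y, 0 <= x -> x <= y -> a x <= a y)
  (s_gt0 : (0 < s)%N) (n : nat) :
  let rs := Num.sqrt (s%:R : R) in
  let L := fun x => ln (1 + rs^-1 * a x) in
  ((n.+1%:R)%:E < rs%:E * ginv a (powR (s%:R) delta / 2))%E ->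
     0 <= Ssum a s n - rs * int0 L (n.+1%:R / rs) /\
     Ssum a s n - rs * int0 L (n.+1%:R / rs)
       <= 1 / 2 * powR (s%:R) (delta - 1 / 2).
Proof.
move=> rs L H.
have r0 : 0 < rs by rewrite sqrtr_gt0 ltr0n.
have h0 : 0 < rs^-1 by rewrite invr_gt0.
set h := rs^-1 in h0 *.
pose Lb := fun x => ln (1 + h * bb a x).
have hb x : 0 <= h * bb a x by apply: mulr_ge0; [exact: ltW | exact: bb_ge0].
have pos x : 0 < 1 + h * bb a x by have := hb x; lra.
have Lnd : nondecreasing_fun Lb.
  move=> x y xy; rewrite /Lb ler_ln ?posrE ?pos //.
  by rewrite lerD2l ler_wpM2l ?(ltW h0) //; apply: bb_nd.
have HI : int0 L (n.+1%:R / rs) = \int[mu]_(x in `[0, n.+1%:R * h]) Lb x.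
  by apply: int0_eq => x x0; rewrite /Lb bb_eq.
have HS : Ssum a s n = \sum_(0 <= k < n.+1) Lb (k.+1%:R * h).
  rewrite /Ssum; apply: eq_bigr => k _; rewrite /Lb bb_eq //.
  by apply: mulr_ge0; [exact: ler0n | exact: ltW].
have [R1 R2] := riemann Lnd h (ltW h0) n.+1.
rewrite HS HI.
set I := \int[mu]_(x in _) _ in R1 R2 *.
set S1 := \sum_(0 <= k < n.+1) Lb (k%:R * h) in R1 *.
set S2 := \sum_(0 <= k < n.+1) Lb (k.+1%:R * h) in R2 *.
have e : rs * h = 1 by rewrite mulfV // gt_eqF.
have R1' : S1 <= rs * I.
  by have := ler_wpM2l (ltW r0) R1; rewrite mulrA e mul1r.
have R2' : rs * I <= S2.
  by have := ler_wpM2l (ltW r0) R2; rewrite mulrA e mul1r.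
have tele : S2 - S1 = Lb (n.+1%:R * h) - Lb (0%:R * h).
  rewrite /S1 /S2 -sumrB.
  exact: (telescope_sumr (fun k => Lb (k%:R * h))).
have Lb0 : 0 <= Lb (0%:R * h).
  by apply: ln_ge0; rewrite lerDl.
have t0 : 0 <= n.+1%:R * h by apply: mulr_ge0; [exact: ler0n | exact: ltW].
have Lbt : Lb (n.+1%:R * h) <= h * a (n.+1%:R * h).
  rewrite /Lb -(bb_eq a t0); apply: le_ln1Dx.
  by have := hb (n.+1%:R * h); lra.
have At : a (n.+1%:R * h) <= powR (s%:R) delta / 2.
  by apply: (ginv_le a_nd t0); apply: cond_div.
have Ht : h * a (n.+1%:R * h) <= h * (powR (s%:R) delta / 2).
  by rewrite ler_wpM2l // ltW.
have hp : h * (powR (s%:R) delta / 2) = 1 / 2 * powR (s%:R) (delta - 1 / 2).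
  exact: half_pow.
split; first lra.
lra.
Qed.
End p1.

Theorem lemmaE1 (R : realType) (a : R -> R) (s : nat) (delta : R)
  (a_ge0 : forall x, 0 <= x -> 0 <= a x)
  (a_nd : forall x y, 0 <= x -> x <= y -> a x <= a y)
  (s_gt0 : (0 < s)%N) (delta_gt0 : 0 < delta) (delta_lt : delta < 1 / 2) :
  let rs := Num.sqrt (s%:R : R) in
  let L := fun x => ln (1 + rs^-1 * a x) in
  (forall n : nat, (0 < n)%N ->
     ((n.+1%:R)%:E < rs%:E * ginv a (powR (s%:R) delta / 2))%E ->
     0 <= Ssum a s n - rs * int0 L (n.+1%:R / rs) /\
     Ssum a s n - rs * int0 L (n.+1%:R / rs)
       <= 1 / 2 * powR (s%:R) (delta - 1 / 2))
  /\
  ((exists x, 0 <= x /\ a x != 0) ->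
     {within `[0, +oo[, continuous (Afun a)} /\
     Afun a (x0 a) = 0 /\
     {in `[x0 a, +oo[ &, {homo Afun a : x y / x < y}} /\
     Afun a x @[x --> +oo] --> +oo)
  /\
  (forall n : nat, (0 < n)%N ->
     ((n.+1%:R)%:E < rs%:E * ginv (Afun a) (powR (s%:R) (1 / 2 - delta)))%E ->
     0 <= int0 a (n.+1%:R / rs) - rs * int0 L (n.+1%:R / rs) /\
     int0 a (n.+1%:R / rs) - rs * int0 L (n.+1%:R / rs)
       <= 1 / 2 * powR (s%:R) (- delta)).
Proof.
move=> rs L; split; [|split].
- by move=> n _ H; exact: (part1 a s delta a_ge0 a_nd s_gt0 n H).
- exact: part2.
- by move=> n _ H; exact: (part3 a s delta a_ge0 a_nd s_gt0 n H).
Qed.
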